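(* Let $a,b,c$ be parameters (real or complex numbers) such that no denominator below vanishes, let $u(n,a,b,c)=\frac{\prod_{j=0}^{n-1}(b+jc)}{\prod_{j=0}^{n-1}(a+jc)}$, and for integers $n\ge1$, $m\ge0$ let $$D(n,m,a,b,c)=\det\big(u(i+j+m,a,b,c)\big)_{i,j=0}^{n-1}.$$ Then $$D(n,0,a,b,c)=\prod_{k=1}^{n-1}\frac{k!\,c^k\prod_{j=0}^{k-1}(b+jc)(a-b+jc)}{\prod_{j=0}^{k-1}(a+(j+k-1)c)\prod_{j=0}^{2k-1}(a+jc)}$$ and $$D(n,m,a,b,c)=D(n,0,a,b,c)\prod_{j=0}^{m-1}\prod_{i=0}^{n-1}\frac{b+(j+i)c}{a+(i+n+j-1)c}.$$
   Context: Empty products equal $1$. *)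

(* Defs.v *)
From HB Require Import structures.
From mathcomp Require Import all_boot all_order all_algebra.
Set Implicit Arguments. Unset Strict Implicit. Unset Printing Implicit Defensive.
Import Order.TTheory GRing.Theory Num.Theory.
Local Open Scope ring_scope.

Definition u (R : numFieldType) (n : nat) (a b c : R) : R :=
  (\prod_(j < n) (b + j%:R * c)) / (\prod_(j < n) (a + j%:R * c)).

Definition D (R : numFieldType) (n m : nat) (a b c : R) : R :=
  \det (\matrix_(i < n, j < n) u (i + j + m) a b c).

(* Main.v *)
Require Import Defs.
From HB Require Import structures.
From mathcomp Require Import all_boot all_order all_algebra.
From mathcomp Require Import ring zify.
Set Implicit Arguments. Unset Strict Implicit. Unset Printing Implicit Defensive.
Import Order.TTheory GRing.Theory Num.Theory.
Local Open Scope ring_scope.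
Definition Np (R : fieldType) (r : nat -> R) (s : seq nat) : {poly R} :=
  \prod_(t <- s) ('X - (r t)%:P).

Lemma Np_monic (R : fieldType) (r : nat -> R) s : Np r s \is monic.
Proof. exact: monic_prod_XsubC. Qed.

Lemma size_Np (R : fieldType) (r : nat -> R) s : size (Np r s) = (size s).+1.
Proof. exact: size_prod_XsubC. Qed.

Lemma NpS (R : fieldType) (r : nat -> R) j :
  Np r (iota 0 j.+1) = Np r (iota 0 j) * ('X - (r j)%:P).
Proof. by rewrite /Np -addn1 iotaD big_cat /= big_seq1. Qed.

Lemma expand_aux (R : fieldType) (r : nat -> R) d : forall j (p g : {poly R}),
  (size p <= j + d)%N -> p = Np r (iota 0 j) * g ->
  {c : nat -> R | [/\ forall k, (k < j)%N -> c k = 0, c j = g.[r j] &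
      p = \sum_(k < j + d) c k *: Np r (iota 0 k)]}.
Proof.
elim: d => [|d IH] j p g hs hp.
  exists (fun _ => 0); case: (eqVneq g 0) => [g0|gn0].
    by split => //; [rewrite g0 horner0 | rewrite hp g0 mulr0 big1 // => k _; rewrite scale0r].
  exfalso; move: hs; rewrite hp size_monicM ?Np_monic // size_Np size_iota addn0.
  rewrite addSn /=; have := size_poly_gt0 g; rewrite gn0; case: (size g) => // k _.
  by rewrite addnS ltnNge leq_addr.
set q := 'X - (r j)%:P.
have hg : g = (g %/ q) * q + (g.[r j])%:P by rewrite -modp_XsubC -divp_eq.
set h := g %/ q.
have hp2 : p - g.[r j] *: Np r (iota 0 j) = Np r (iota 0 j.+1) * h.
  rewrite hp {1}hg NpS mulrDr -mul_polyC [_%:P * _]mulrC addrK.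
  by rewrite -mulrA [q * h]mulrC.
have hs2 : (size (p - g.[r j] *: Np r (iota 0 j))%R <= j.+1 + d)%N.
  apply: (leq_trans (size_polyD _ _)); rewrite geq_max addSnnS hs /=.
  rewrite size_polyN.
  apply: (leq_trans (size_scale_leq _ _)).
  by rewrite size_Np size_iota addnS ltnS leq_addr.
have [c' [c'0 c'j c'p]] := IH _ _ _ hs2 hp2.
exists (fun k => if k == j then g.[r j] else c' k); split.
- by move=> k hk; rewrite (ltn_eqF hk) c'0 // ltnS ltnW.
- by rewrite eqxx.
have hj : (j < j + d.+1)%N by rewrite addnS ltnS leq_addr.
rewrite (bigD1 (Ordinal hj)) //= eqxx.
have -> : p = g.[r j] *: Np r (iota 0 j) + (p - g.[r j] *: Np r (iota 0 j)) by rewrite addrC subrK.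
congr (_ + _); rewrite c'p addSnnS (bigD1 (Ordinal hj)) //= c'0 ?ltnSn // scale0r add0r.
by apply: eq_bigr => k /negbTE hk; rewrite -val_eqE /= in hk; rewrite hk.
Qed.

Lemma expand (R : fieldType) (r : nat -> R) n j (p g : {poly R}) :
  (j < n)%N -> (size p <= n)%N -> p = Np r (iota 0 j) * g ->
  {c : nat -> R | [/\ forall k, (k < j)%N -> c k = 0, c j = g.[r j] &
      p = \sum_(k < n) c k *: Np r (iota 0 k)]}.
Proof.
move=> hj hs hp.
have e : (j + (n - j))%N = n by rewrite subnKC // ltnW.
have hs' : (size p <= j + (n - j))%N by rewrite e.
have [c [h1 h2 h3]] := expand_aux hs' hp.
exists c; split => //; rewrite h3.
rewrite -(big_mkord xpredT (fun k => c k *: Np r (iota 0 k))).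
by rewrite e big_mkord.
Qed.

Lemma detP (R : fieldType) n (r x : nat -> R) (P G : nat -> {poly R}) :
  (forall j, (j < n)%N -> (size (P j) <= n)%N) ->
  (forall j, P j = Np r (iota 0 j) * G j) ->
  \det (\matrix_(i < n, j < n) (P j).[x i]) =
  (\prod_(i < n) \prod_(j < n | (i < j)%N) (x j - x i)) * \prod_(j < n) (G j).[r j].
Proof.
move=> hs hP.
pose c (j : 'I_n) := sval (expand (ltn_ord j) (hs j (ltn_ord j)) (hP j)).
have cP (j : 'I_n) := svalP (expand (ltn_ord j) (hs j (ltn_ord j)) (hP j)).
pose C := \matrix_(k < n, j < n) c j k.
pose NB := \matrix_(i < n, k < n) (Np r (iota 0 k)).[x i].
have eM : \matrix_(i < n, j < n) (P j).[x i] = NB *m C.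
  apply/matrixP => i j; rewrite !mxE.
  have [_ _ ->] := cP j.
  rewrite horner_sum; apply: eq_bigr => k _; rewrite hornerZ !mxE mulrC.
  by [].
have dC : \det C = \prod_(j < n) (G j).[r j].
  rewrite det_trig; last first.
    apply/is_trig_mxP => k j hkj; rewrite mxE.
    by have [h _ _] := cP j; apply: h.
  by apply: eq_bigr => j _; rewrite mxE /c; have [_ -> _] := cP j.
pose V := Vandermonde n (\row_(i < n) x i).
pose T := \matrix_(l < n, k < n) (Np r (iota 0 k))`_l.
have eNB : NB = V^T *m T.
  apply/matrixP => i k; rewrite !mxE.
  rewrite (@horner_coef_wide _ n); last by rewrite size_Np size_iota.
  by apply: eq_bigr => l _; rewrite !mxE mulrC.
have dT : \det T = 1.
  rewrite -det_tr det_trig; last first.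
    apply/is_trig_mxP => k l hkl; rewrite !mxE nth_default //.
    by rewrite size_Np size_iota.
  apply: big1 => k _; rewrite !mxE.
  have := Np_monic r (iota 0 k); move/monicP; rewrite lead_coefE size_Np size_iota.
  by [].
rewrite eM det_mulmx eNB det_mulmx det_tr dT mulr1 det_Vandermonde dC.
congr (_ * _); apply: eq_bigr => i _; apply: eq_bigr => j _; by rewrite !mxE.
Qed.

Definition Pa (R : numFieldType) (a c : R) (N : nat) : R := \prod_(j < N) (a + j%:R * c).

Lemma prod_iota (R : numFieldType) (F : nat -> R) k l :
  \prod_(t <- iota k l) F t = \prod_(i < l) F (k + i)%N.
Proof.
by rewrite -[k]addn0 iotaDl big_map addn0 -(subn0 l) -/(index_iota 0 l) big_mkord subn0.
Qed.

Lemma Pa_split (R : numFieldType) (a c : R) N M :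
  Pa a c (N + M) = Pa a c N * \prod_(t < M) (a + (N + t)%:R * c).
Proof. by rewrite /Pa big_split_ord. Qed.

Definition Kc (R : numFieldType) n (a b c : R) : R :=
  (\prod_(i < n) \prod_(j < n | (i < j)%N) (j%:R * c - i%:R * c)) *
  \prod_(j < n) Pa (a - b) c (n.-1 - j).

Lemma Dform (R : numFieldType) n m (a b c : R) :
  (forall k, (k.+2 < 2 * n + m)%N -> a + k%:R * c != 0) ->
  D n m a b c = (\prod_(i < n) Pa b c (i + m)) / (\prod_(i < n) Pa a c (i + m + n - 1)) * Kc n a b c.
Proof.
move=> ha.
pose r t := - (b + t%:R * c).
pose s t := - (a + t%:R * c).
pose x (i : nat) := (i + m)%:R * c.
pose G j := Np s (iota j (n.-1 - j)).
pose P j := Np r (iota 0 j) * G j.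
pose al (i : nat) := Pa b c (i + m) / Pa a c (i + m + n - 1).
have hPx i j : (P j).[x i] = \prod_(t < j) (b + (i + m + t)%:R * c) *
                              \prod_(t < n.-1 - j) (a + (i + m + j + t)%:R * c).
  rewrite /P /G /Np hornerM !horner_prod !prod_iota; congr (_ * _);
    apply: eq_bigr => t _; rewrite hornerXsubC /x /r /s !natrD; ring.
have hent (i j : 'I_n) : u (i + j + m) a b c = al i * (P j).[x i].
  have hj : (j <= n.-1)%N by rewrite -ltnS prednK ?ltn_ord // (leq_ltn_trans _ (ltn_ord j)).
  have e1 : (i + j + m = (i + m) + j)%N by rewrite addnAC.
  have e2 : (i + m + n - 1 = (i + m + j) + (n.-1 - j))%N by have := ltn_ord j; lia.
  set E := \prod_(t < n.-1 - j) (a + (i + m + j + t)%:R * c).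
  have hE : E != 0.
    apply/prodf_neq0 => t _; apply: ha.
    have := ltn_ord t; have := ltn_ord i; have := ltn_ord j; lia.
  have hA : Pa a c (i + m + j) != 0.
    apply/prodf_neq0 => t _; apply: ha.
    have := ltn_ord t; have := ltn_ord i; have := ltn_ord j; lia.
  rewrite hPx /al /u -/(Pa b c _) -/(Pa a c _) e1 e2.
  rewrite (Pa_split b c (i+m) j) (Pa_split a c (i+m+j) (n.-1-j)) -/E.
  by field; rewrite hE hA.
have eD : \matrix_(i < n, j < n) u (i + j + m) a b c =
   diag_mx (\row_(i < n) al i) *m \matrix_(i < n, j < n) (P j).[x i].
  by apply/matrixP => i j; rewrite mul_diag_mx !mxE hent.
have hs j : (j < n)%N -> (size (P j) <= n)%N.
  move=> hj; rewrite /P size_monicM ?Np_monic ?monic_neq0 ?Np_monic // !size_Np !size_iota.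
  lia.
rewrite /D eD det_mulmx det_diag (@detP _ n r x P G hs (fun j => erefl)).
rewrite /Kc -prodf_div; congr (_ * (_ * _)).
- by apply: eq_bigr => i _; rewrite mxE.
- apply: eq_bigr => i _; apply: eq_bigr => j _; rewrite /x !natrD; ring.
- apply: eq_bigr => j _; rewrite /G /Np horner_prod prod_iota /Pa.
  by apply: eq_bigr => t _; rewrite hornerXsubC /r /s natrD; ring.
Qed.

Lemma tri_rec (R : numFieldType) n (F : nat -> nat -> R) :
  \prod_(i < n.+1) \prod_(j < n.+1 | (i < j)%N) F i j =
  (\prod_(i < n) \prod_(j < n | (i < j)%N) F i j) * \prod_(i < n) F i n.
Proof.
rewrite big_ord_recr /= [X in _ * X]big1 => [|j]; last by rewrite ltnNge -ltnS ltn_ord.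
rewrite mulr1 -big_split; apply: eq_bigr => i _ /=.
by rewrite (big_mkcond (fun j : 'I_n.+1 => (i < j)%N)) big_ord_recr /= -big_mkcond /= ltn_ord.
Qed.

Lemma prod_sub_fact n : (\prod_(i < n) (n - i) = n`!)%N.
Proof.
elim: n => [|n IH]; first by rewrite big_ord0.
rewrite big_ord_recl subn0 factS; congr (_ * _)%N.
by rewrite -IH; apply: eq_bigr => i _; rewrite /= subSS.
Qed.

Lemma Vlem (R : numFieldType) n (c : R) :
  \prod_(i < n) \prod_(j < n | (i < j)%N) (j%:R * c - i%:R * c) =
  \prod_(k < n) (k`!%:R * c ^+ k).
Proof.
elim: n => [|n IH]; first by rewrite !big_ord0.
rewrite (@tri_rec _ _ (fun i j : nat => j%:R * c - i%:R * c)) IH big_ord_recr /=; congr (_ * _).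
have -> : \prod_(i < n) (n%:R * c - i%:R * c) = \prod_(i < n) ((n - i)%:R * c).
  by apply: eq_bigr => i _; rewrite natrB ?(ltnW (ltn_ord i)) //; ring.
by rewrite big_split /= prodr_const card_ord -natr_prod prod_sub_fact.
Qed.

Lemma rev_prod (R : numFieldType) n (F : nat -> R) :
  \prod_(j < n) F (n.-1 - j)%N = \prod_(k < n) F k.
Proof.
elim: n => [|n IH]; first by rewrite !big_ord0.
rewrite big_ord_recl big_ord_recr /= subn0 mulrC; congr (_ * _).
by rewrite -IH; apply: eq_bigr => j _; congr F; rewrite /bump; lia.
Qed.

Lemma den_lem (R : numFieldType) n (a c : R) :
  \prod_(1 <= k < n.+1) ((\prod_(j < k) (a + (j + k - 1)%:R * c)) * \prod_(j < 2 * k) (a + j%:R * c))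
  = \prod_(i < n.+1) Pa a c (i + n).
Proof.
elim: n => [|n IH].
  by rewrite big_geq // big_ord1 /Pa big_ord0.
rewrite big_nat_recr //= IH [RHS]big_ord_recr /=.
have e : forall i, Pa a c (i + n.+1) = Pa a c (i + n) * (a + (i + n)%:R * c).
  by move=> i; rewrite addnS -addn1 Pa_split big_ord1 addn0.
under [in RHS]eq_bigr do rewrite e.
rewrite big_split /= -!mulrA; congr (_ * _); congr (_ * _).
- by apply: eq_bigr => j _; do 3 f_equal; lia.
- by rewrite /Pa; have -> : (2 * n.+1 = n.+1 + n.+1)%N by lia.
Qed.

Unset Implicit Arguments.
Theorem corollary2 (R : numFieldType) (n m : nat) (a b c : R)
  (hn : (1 <= n)%N)
  (ha : forall j : nat, (j.+2 < 2 * n + m)%N -> a + j%:R * c != 0) :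
  D n 0 a b c =
    \prod_(1 <= k < n)
      (((k`!)%:R * c ^+ k *
          \prod_(j < k) ((b + j%:R * c) * (a - b + j%:R * c))) /
       ((\prod_(j < k) (a + (j + k - 1)%:R * c)) *
          \prod_(j < 2 * k) (a + j%:R * c)))
  /\
  D n m a b c =
    D n 0 a b c *
      \prod_(j < m) \prod_(i < n)
        ((b + (j + i)%:R * c) / (a + (i + n + j - 1)%:R * c)).
Proof.
have ha0 : forall k, (k.+2 < 2 * n + 0)%N -> a + k%:R * c != 0.
  by move=> k hk; apply: ha; lia.
rewrite (@Dform _ n 0 a b c ha0) (@Dform _ n m a b c ha).
case: n hn ha ha0 => [//|n] _ ha ha0.
split.
- have en : forall F : nat -> R, F 0%N = 1 -> \prod_(1 <= k < n.+1) F k = \prod_(k < n.+1) F k.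
    by move=> F h; rewrite -(big_mkord xpredT F) (big_ltn (ltn0Sn n)) h mul1r.
  rewrite prodf_div en; last by rewrite big_ord0 expr0 !mulr1.
  have -> : \prod_(i < n.+1) Pa a c (i + 0 + n.+1 - 1) = \prod_(i < n.+1) Pa a c (i + n).
    by apply: eq_bigr => i _; congr Pa; lia.
  rewrite -(den_lem n a c).
  rewrite /Kc Vlem (@rev_prod _ _ (Pa (a - b) c)) -!big_split /=.
  have -> : \prod_(i < n.+1) Pa b c (i + 0) = \prod_(i < n.+1) Pa b c i.
    by apply: eq_bigr => i _; rewrite addn0.
  rewrite mulrAC -big_split /=; congr (_ * _).
  apply: eq_bigr => k _; rewrite /Pa big_split /=; ring.
- rewrite exchange_big /=.
  under [X in _ = _ * X]eq_bigr do rewrite prodf_div.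
  rewrite prodf_div.
  have eb i : Pa b c (i + m) = Pa b c (i + 0) * \prod_(j < m) (b + (j + i)%:R * c).
    by rewrite addn0 Pa_split; congr (_ * _); apply: eq_bigr => j _; rewrite addnC.
  have ea i : Pa a c (i + m + n.+1 - 1) = Pa a c (i + 0 + n.+1 - 1) *
      \prod_(j < m) (a + (i + n.+1 + j - 1)%:R * c).
    have -> : (i + m + n.+1 - 1 = (i + 0 + n.+1 - 1) + m)%N by lia.
    by rewrite Pa_split; congr (_ * _); apply: eq_bigr => j _; do 3 f_equal; lia.
  rewrite (eq_bigr _ (fun (i : 'I_n.+1) _ => eb i)) (eq_bigr _ (fun (i : 'I_n.+1) _ => ea i)).
  rewrite !big_split /= !invfM; ring.
Qed.
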